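(* Let $d\ge 2$ and let $\rho$ be a density matrix on $\mathbb{C}^d$ with entries $\rho_{jk}=\langle j|\rho|k\rangle$, $j,k\in\{0,\dots,d-1\}$, in the computational basis. Then $$F_c(\rho)=\frac{1}{d}+\frac{1}{d}\,C_{l_1}(\rho)$$ if and only if one can choose arguments $\theta_{jk}\in[0,2\pi]$ of the entries (i.e. $\rho_{jk}=|\rho_{jk}|e^{\mathfrak{i}\theta_{jk}}$, with $\theta_{jk}$ arbitrary when $\rho_{jk}=0$) such that for all $j,p,k\in\{0,\dots,d-1\}$ there is an integer $n$ with $$\theta_{jp}+\theta_{pk}=2n\pi+\theta_{jk}.$$
   Context: Coherence is taken with respect to the computational basis $\{|0\rangle,\dots,|d-1\rangle\}$. The $l_1$-norm coherence is $C_{l_1}(\rho)=\sum_{j\neq k}|\langle j|\rho|k\rangle|$. The set of maximally coherent states is $\mathcal{M}=\{|\phi\rangle=\frac{1}{\sqrt d}\sum_{j=0}^{d-1}e^{\mathfrak{i}\theta_j}|j\rangle:\theta_j\in[0,2\pi]\}$. The coherence fraction of a state $\rho$ is $F_c(\rho)=\max_{|\phi\rangle\in\mathcal{M}}\langle\phi|\rho|\phi\rangle$. *)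

(* Defs.v *)
From HB Require Import structures.
From mathcomp Require Import all_boot all_order all_algebra.
From mathcomp Require Import complex.
From mathcomp Require Import reals trigo.
Set Implicit Arguments. Unset Strict Implicit. Unset Printing Implicit Defensive.
Import Order.TTheory GRing.Theory Num.Theory.
Local Open Scope ring_scope.
Local Open Scope complex_scope.

Section Defs.
Variable R : realType.

Definition expi (t : R) : R[i] := cos t +i* sin t.

Definition adjmx (m n : nat) (A : 'M[R[i]]_(m, n)) : 'M[R[i]]_(n, m) :=
  map_mx Num.conj A^T.

Definition density_matrix (d : nat) (rho : 'M[R[i]]_d) : Prop :=
  adjmx rho = rho /\
  (forall v : 'cV[R[i]]_d, 0 <= (adjmx v *m rho *m v) 0 0) /\
  \tr rho = 1.

Definition C_l1 (d : nat) (rho : 'M[R[i]]_d) : R[i] :=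
  \sum_(j < d) \sum_(k < d | j != k) `|rho j k|.

Definition mcs (d : nat) (theta : 'I_d -> R) : 'cV[R[i]]_d :=
  \col_j (((Num.sqrt (d%:R : R))^-1)%:C * expi (theta j)).

Definition phase_ok (t : R) : Prop := 0 <= t <= 2 * pi.

Definition overlap (d : nat) (rho : 'M[R[i]]_d) (theta : 'I_d -> R) : R[i] :=
  (adjmx (mcs theta) *m rho *m mcs theta) 0 0.

Definition coherence_fraction_is (d : nat) (rho : 'M[R[i]]_d) (x : R[i]) : Prop :=
  (exists2 theta : 'I_d -> R, (forall j, phase_ok (theta j)) & overlap rho theta = x) /\
  (forall theta : 'I_d -> R, (forall j, phase_ok (theta j)) -> overlap rho theta <= x).

End Defs.

(* Main.v *)
Require Import Defs.
From HB Require Import structures.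
From mathcomp Require Import all_boot all_order all_algebra.
From mathcomp Require Import complex.
From mathcomp Require Import reals trigo.
From mathcomp Require Import ring lra.
Import Order.TTheory GRing.Theory Num.Theory.
Local Open Scope ring_scope.
Local Open Scope complex_scope.
Section S.
Variable R : realType.
Implicit Types a b : R.
Lemma expiD a b : expi (a + b) = expi a * expi b.
Proof. rewrite /expi cosD sinD; simpc; congr (_ +i* _); ring. Qed.
Lemma expi0 : expi 0 = 1 :> R[i].
Proof. by rewrite /expi cos0 sin0. Qed.
Lemma expiN a : expi (- a) * expi a = 1.
Proof. by rewrite -expiD addNr expi0. Qed.
Lemma expi2pi : expi (2 * pi) = 1 :> R[i].
Proof. by rewrite mulr_natl /expi cos2pi sin2pi. Qed.
Lemma expi2npi (n : int) : expi (2 * n%:~R * pi) = 1 :> R[i].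
Proof.
have Hn : forall m : nat, expi (2 * m%:R * pi) = 1 :> R[i].
  elim=> [|m IH]; first by rewrite mulr0 mul0r expi0.
  have -> : 2 * m.+1%:R * pi = 2 * pi + 2 * m%:R * pi :> R by rewrite -addn1 natrD; ring.
  by rewrite expiD IH expi2pi mulr1.
case: n => m; first by rewrite -[(Posz m)%:~R]/(m%:R : R) Hn.
rewrite NegzE mulrNz mulrN mulNr -[((Posz m.+1)%:~R)]/(m.+1%:R : R).
by rewrite -(mul1r (expi _)) -(Hn m.+1) mulrC expiN.
Qed.
Lemma norm_expi a : `|expi a| = 1.
Proof. by rewrite /expi; simpc; rewrite cos2Dsin2 sqrtr1. Qed.
Lemma conj_expi a : Num.conj (expi a) = expi (- a).
Proof. by rewrite -[Num.conj _]/(conjc _) /expi cosN sinN; simpc. Qed.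
Lemma conjE (x : R[i]) : Num.conj x = conjc x.
Proof. by []. Qed.
Lemma conjc_expi a : conjc (expi a) = expi (- a).
Proof. by rewrite /expi cosN sinN; simpc. Qed.
Lemma conjc_sexpi r a : conjc (r%:C * expi a) = r%:C * expi (- a).
Proof. by rewrite /expi cosN sinN; simpc. Qed.

Lemma quadE n (A : 'M[R[i]]_n) (v : 'cV[R[i]]_n) :
  (adjmx v *m A *m v) 0 0 =
  \sum_j \sum_k Num.conj (v j 0) * A j k * v k 0.
Proof.
rewrite mxE exchange_big /=; apply: eq_bigr => k _.
rewrite mxE mulr_suml; apply: eq_bigr => j _.
by rewrite /adjmx !mxE.
Qed.

Lemma psd_diag n (A : 'M[R[i]]_n) :
  (forall v : 'cV[R[i]]_n, 0 <= (adjmx v *m A *m v) 0 0) ->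
  forall j, 0 <= A j j.
Proof.
move=> H j; have := H (\col_i (i == j)%:R); rewrite quadE.
rewrite (bigD1 j) //= [X in _ + X]big1 ?addr0; last first.
  move=> a /negbTE na.
  by apply: big1 => b _; rewrite !mxE na conjE conjc0 !mul0r.
rewrite (bigD1 j) //= [X in _ + X]big1 ?addr0; last first.
  by move=> b /negbTE nb; rewrite !mxE nb mulr0.
by rewrite !mxE eqxx conjE conjc1 mul1r mulr1.
Qed.

Definition zz {n} (rho : 'M[R[i]]_n) (th : 'I_n -> R) j k :=
  expi (R:=R) (- th j) * rho j k * expi (th k).

Lemma norm_zz n (rho : 'M[R[i]]_n) th j k : `|zz rho th j k| = `|rho j k|.
Proof. by rewrite /zz !normrM !norm_expi mul1r mulr1. Qed.

Lemma zz_diag n (rho : 'M[R[i]]_n) th j : zz rho th j j = rho j j.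
Proof. by rewrite /zz mulrAC -expiD addNr expi0 mul1r. Qed.

Lemma overlapE n (rho : 'M[R[i]]_n) th : (0 < n)%N ->
  overlap rho th = (n%:R)^-1 * \sum_j \sum_k zz rho th j k.
Proof.
move=> n0; rewrite /overlap quadE mulr_sumr; apply: eq_bigr => j _.
rewrite mulr_sumr; apply: eq_bigr => k _.
rewrite /mcs !mxE conjE conjc_sexpi /zz.
set s := ((Num.sqrt (n%:R : R))^-1)%:C.
have -> : (n%:R : R[i])^-1 = s * s.
  have e : (Num.sqrt (n%:R : R))^-1 * (Num.sqrt (n%:R : R))^-1 = (n%:R)^-1.
    rewrite -invrM ?unitfE ?sqrtr_eq0 -?ltNge ?ltr0n //.
    by rewrite -expr2 sqr_sqrtr ?ler0n.
  by rewrite /s -rmorphM e fmorphV rmorph_nat.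
ring.
Qed.


Lemma overlap_split n (rho : 'M[R[i]]_n) th : (0 < n)%N -> \tr rho = 1 ->
  overlap rho th = (n%:R)^-1 * (1 + \sum_j \sum_(k | j != k) zz rho th j k).
Proof.
move=> n0 Htr; rewrite overlapE //; congr (_ * _).
have -> : \sum_j \sum_k zz rho th j k =
    \sum_j (zz rho th j j + \sum_(k | j != k) zz rho th j k).
  apply: eq_bigr => j _; rewrite (bigD1 j) //=; congr (_ + _).
  by apply: eq_bigl => k; rewrite eq_sym.
rewrite big_split /=; congr (_ + _); rewrite -Htr /mxtrace.
by apply: eq_bigr => j _; exact: zz_diag.
Qed.

Lemma C_l1E n (rho : 'M[R[i]]_n) th :
  C_l1 rho = \sum_j \sum_(k | j != k) `|zz rho th j k|.
Proof.
by apply: eq_bigr => j _; apply: eq_bigr => k _; rewrite norm_zz.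
Qed.

Definition md (t : R) : R := t - 2 * pi * (Num.floor (t / (2 * pi)))%:~R.

Lemma md_ok t : phase_ok (md t).
Proof.
have pi0 : 0 < pi :> R by exact: pi_gt0.
set q := t / (2 * pi).
have h1 := real_floor_le (num_real q).
have h2 := real_floorD1_gt (num_real q).
rewrite intrD in h2.
have ht : t = 2 * pi * q by rewrite /q mulrC divfK // mulf_neq0 // gt_eqF.
rewrite /phase_ok /md -/q ht.
set f := (Num.floor q)%:~R : R.
apply/andP; split; nra.
Qed.

Lemma md_expi t : expi (md t) = expi t.
Proof.
rewrite -[LHS](mulr1) -(expi2npi (Num.floor (t / (2 * pi)))) -expiD.
by congr expi; rewrite /md; ring.
Qed.

End S.

Theorem theorem1 (R : realType) (d : nat) (rho : 'M[R[i]]_d) :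
  (2 <= d)%N -> density_matrix rho ->
  (coherence_fraction_is rho ((d%:R)^-1 + (d%:R)^-1 * C_l1 rho) <->
   exists theta : 'I_d -> 'I_d -> R,
     [/\ forall j k, phase_ok (theta j k),
         forall j k, rho j k = `|rho j k| * expi (theta j k)
       & forall j p k, exists n : int,
           theta j p + theta p k = 2 * n%:~R * pi + theta j k]).
Proof.
move=> d2 [Hherm [Hpsd Htr]].
have d0 : (0 < d)%N by apply: leq_trans d2.
have Dn0 : (d%:R : R[i]) != 0 by rewrite pnatr_eq0 -lt0n.
split.
- move=> [[psi Hpsi Hov] _].
  rewrite (@overlap_split R d rho psi d0 Htr) (@C_l1E R d rho psi) mulrDr mulr1 in Hov.
  move/addrI/(mulfI (invr_neq0 Dn0)): Hov.
  rewrite !pair_big_dep => HS.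
  have Hz : forall j k, j != k -> zz R rho psi j k = `|zz R rho psi j k|.
    move=> j k njk.
    have Hb : forall p : 'I_d * 'I_d, true && (p.1 != p.2) ->
        `|zz R rho psi p.1 p.2| <= `|zz R rho psi p.1 p.2| by move=> p _.
    exact: (@normC_sum_upper _ _ _ _ _ Hb HS (j, k) njk).
  have Hrho : forall j k, rho j k = `|rho j k| * expi (psi j - psi k).
    move=> j k; case: (eqVneq j k) => [->|njk].
      by rewrite subrr expi0 mulr1 ger0_norm //; exact: psd_diag.
    have := Hz j k njk; rewrite norm_zz => <-.
    have -> : zz R rho psi j k * expi (psi j - psi k) =
        rho j k * (expi (- psi j) * expi (psi k) * expi (psi j - psi k)).
      by rewrite /zz; ring.
    rewrite -!expiD.
    have -> : - psi j + psi k + (psi j - psi k) = 0 by ring.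
    by rewrite expi0 mulr1.
  exists (fun j k => md R (psi j - psi k)); split.
  + by move=> j k; exact: md_ok.
  + by move=> j k; rewrite md_expi; exact: Hrho.
  + move=> j p k.
    exists (Num.floor ((psi j - psi k) / (2 * pi)) - Num.floor ((psi j - psi p) / (2 * pi))
       - Num.floor ((psi p - psi k) / (2 * pi))).
    by rewrite /md !rmorphB /=; ring.
- move=> [Th [Hph Hrho Hcoc]].
  pose i0 : 'I_d := Ordinal d0.
  pose psi := fun j => 2 * pi - Th i0 j.
  have Hz : forall j k, zz R rho psi j k = `|rho j k|.
    move=> j k; have [n Hn] := Hcoc i0 j k.
    rewrite /zz {1}Hrho.
    have -> : expi (- psi j) * (`|rho j k| * expi (Th j k)) * expi (psi k) =
      `|rho j k| * (expi (- psi j) * expi (Th j k) * expi (psi k)) by ring.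
    rewrite -!expiD.
    have -> : - psi j + Th j k + psi k = 2 * n%:~R * pi by rewrite /psi; lra.
    by rewrite expi2npi mulr1.
  split.
  + exists psi.
      move=> j; rewrite /psi /phase_ok; have /andP [a b] := Hph i0 j.
      by apply/andP; split; lra.
    rewrite (@overlap_split R d rho psi d0 Htr) mulrDr mulr1 /C_l1; congr (_ + _).
    congr (_ * _); apply: eq_bigr => j _; apply: eq_bigr => k _; exact: Hz.
  + move=> th _.
    have H0 : 0 <= overlap rho th := Hpsd (mcs th).
    rewrite -(ger0_norm H0) (@overlap_split R d rho th d0 Htr) normrM.
    rewrite ger0_norm ?invr_ge0 ?ler0n //.
    rewrite -[X in _ <= X + _]mulr1 -mulrDr.
    apply: ler_wpM2l; first by rewrite invr_ge0 ler0n.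
    apply: le_trans (ler_normD _ _) _; rewrite normr1 lerD2l (@C_l1E R d rho th).
    apply: le_trans (ler_norm_sum _ _ _) _; apply: ler_sum => j _.
    exact: ler_norm_sum.
Qed.
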